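(* Let $n\geq 2$ and $m\in\{1,\ldots,n-1\}$. Let $x_1,\ldots,x_n$ be distinct real numbers and $y_1,\ldots,y_n$ be distinct real numbers, and let $S^{\circ m}=[(1+x_iy_j)^m]_{i,j=1}^n$. Let $D_m$ be the $n\times n$ diagonal matrix with diagonal entries $\binom{m}{0},\binom{m}{1},\ldots,\binom{m}{m},0,\ldots,0$ (i.e. $(D_m)_{kk}=\binom{m}{k-1}$ for $1\leq k\leq m+1$ and $(D_m)_{kk}=0$ for $m+2\leq k\leq n$). Then \[ S^{\circ m}=\Big(L^{\mathbf x(1)}\cdots L^{\mathbf x(n-1)}U^{\mathbf x(n-1)}\cdots U^{\mathbf x(1)}\Big)\,D_m\,\Big(L^{\mathbf y(1)}\cdots L^{\mathbf y(n-1)}U^{\mathbf y(n-1)}\cdots U^{\mathbf y(1)}\Big)^T. \]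
   Context: For distinct real numbers $x_1,\ldots,x_n$ and $1\leq k\leq n-1$, the $n\times n$ lower bidiagonal matrix $L^{\mathbf x(k)}$ and upper bidiagonal matrix $U^{\mathbf x(k)}$ are defined by \[ (L^{\mathbf x(k)})_{ij}=\begin{cases} 1 & \text{if } i=j,\\ 1 & \text{if } i=j+1,\ i=n-k+1,\\ \displaystyle\prod_{t=0}^{k-n+i-2}\frac{x_i-x_{i-1-t}}{x_{i-1}-x_{i-2-t}} & \text{if } i=j+1,\ i>n-k+1,\\ 0 & \text{otherwise}, \end{cases} \] \[ (U^{\mathbf x(k)})_{ij}=\begin{cases} 1 & \text{if } i=j,\ i\leq n-k,\\ x_i-x_{n-k} & \text{if } i=j,\ i>n-k,\\ x_1 & \text{if } i=j-1,\ i=n-k,\\ \displaystyle x_{k-n+i+1}\prod_{t=1}^{k-n+i}\frac{x_i-x_{i-t}}{x_{i+1}-x_{i+1-t}} & \text{if } i=j-1,\ i>n-k,\\ 0 & \text{otherwise}. \end{cases} \] $L^{\mathbf y(k)}$ and $U^{\mathbf y(k)}$ are defined in the same way with $y_1,\ldots,y_n$ in place of $x_1,\ldots,x_n$. $A^T$ denotes the transpose. *)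

(* Defs.v *)
From mathcomp Require Import all_boot all_order all_algebra.
Set Implicit Arguments. Unset Strict Implicit. Unset Printing Implicit Defensive.
Import Order.TTheory GRing.Theory Num.Theory.
Local Open Scope ring_scope.

(* Conventions: a family x_1,...,x_n of reals is a function x : nat -> R,
   where only the values x 1, ..., x n matter (1-based, as in the paper).
   An n x n matrix 'M[R]_n has 0-based ordinal indices; the paper's entry
   (i,j) (1-based) is the Rocq entry (i-1, j-1). *)

Definition distinct_on {R : realFieldType} (n : nat) (x : nat -> R) : Prop :=
  forall i j : nat, (1 <= i <= n)%N -> (1 <= j <= n)%N -> i <> j -> x i <> x j.

Definition Lmat {R : realFieldType} (n : nat) (x : nat -> R) (k : nat) : 'M[R]_n :=
  \matrix_(i0 < n, j0 < n)
    let i := i0.+1 in let j := j0.+1 in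
    if i == j then 1
    else if i == j.+1 then
      (if i == (n - k).+1 then 1
       else if ((n - k).+1 < i)%N then
         \prod_(0 <= t < (k + i - n - 1)%N)
            ((x i - x (i - 1 - t)%N) / (x (i - 1)%N - x (i - 2 - t)%N))
       else 0)
    else 0.

Definition Umat {R : realFieldType} (n : nat) (x : nat -> R) (k : nat) : 'M[R]_n :=
  \matrix_(i0 < n, j0 < n)
    let i := i0.+1 in let j := j0.+1 in
    if i == j then (if (i <= n - k)%N then 1 else x i - x (n - k)%N)
    else if j == i.+1 then
      (if i == (n - k)%N then x 1%N
       else if ((n - k) < i)%N then
         x (k + i + 1 - n)%N *
         \prod_(1 <= t < (k + i - n).+1)
            ((x i - x (i - t)%N) / (x i.+1 - x (i.+1 - t)%N))
       else 0)
    else 0.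

Definition Lprod {R : realFieldType} (n : nat) (x : nat -> R) : 'M[R]_n :=
  foldr (fun k A => Lmat n x k *m A) 1%:M (iota 1 n.-1).

Definition Uprod {R : realFieldType} (n : nat) (x : nat -> R) : 'M[R]_n :=
  foldr (fun k A => Umat n x k *m A) 1%:M (rev (iota 1 n.-1)).

Definition Spow {R : realFieldType} (n m : nat) (x y : nat -> R) : 'M[R]_n :=
  \matrix_(i < n, j < n) (1 + x i.+1 * y j.+1) ^+ m.

Definition Dmat {R : realFieldType} (n m : nat) : 'M[R]_n :=
  \matrix_(i < n, j < n)
    if i == j then (if (i <= m)%N then ('C(m, i))%:R else 0) else 0.

(* Main.v *)
Require Import Defs.
From mathcomp Require Import all_boot all_order all_algebra.
From mathcomp Require Import zify ring lra.
Import GRing.Theory Num.Theory.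
Local Open Scope ring_scope.

Section Aux.
Variable R : realFieldType.
Variable n : nat.

Definition mkM (f : nat -> nat -> R) : 'M[R]_n := \matrix_(i < n, j < n) f i.+1 j.+1.

Lemma ord_neq (k j : 'I_n) : (val k != val j) -> k != j.
Proof. by []. Qed.

Lemma neq_val (k j : 'I_n) : k != j -> (k : nat) <> j.
Proof. by move=> /eqP h e; apply: h; apply: val_inj. Qed.

Lemma mul_lowbi (f g : nat -> nat -> R) :
  (forall i j, (1 <= i <= n)%N -> (1 <= j <= n)%N -> i != j -> i != j.+1 -> g i j = 0) ->
  forall i j : 'I_n, (mkM f *m mkM g) i j =
    f i.+1 j.+1 * g j.+1 j.+1 + (if (j.+2 <= n)%N then f i.+1 j.+2 * g j.+2 j.+1 else 0).
Proof.
move=> hg i j; have hjn := ltn_ord j; rewrite mxE (bigD1 j) //= !mxE; congr (_ + _).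
case: ifP => hj.
  rewrite (bigD1 (Ordinal hj)) /=; last by apply: ord_neq => /=; lia.
  rewrite !mxE big1 ?addr0 // => k /andP[/neq_val hk1 /neq_val hk2]; have hkn := ltn_ord k.
  rewrite /= in hk2; rewrite !mxE hg ?mulr0 //=; apply/eqP; lia.
rewrite big1 // => k /neq_val hk1; have hkn := ltn_ord k; rewrite !mxE hg ?mulr0 //; apply/eqP; lia.
Qed.

Lemma mul_upbi (f g : nat -> nat -> R) :
  (forall i j, (1 <= i <= n)%N -> (1 <= j <= n)%N -> j != i -> j != i.+1 -> f i j = 0) ->
  forall i j : 'I_n, (mkM f *m mkM g) i j =
    f i.+1 i.+1 * g i.+1 j.+1 + (if (i.+2 <= n)%N then f i.+1 i.+2 * g i.+2 j.+1 else 0).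
Proof.
move=> hf i j; have hin := ltn_ord i; rewrite mxE (bigD1 i) //= !mxE; congr (_ + _).
case: ifP => hi.
  rewrite (bigD1 (Ordinal hi)) /=; last by apply: ord_neq => /=; lia.
  rewrite !mxE big1 ?addr0 // => k /andP[/neq_val hk1 /neq_val hk2]; have hkn := ltn_ord k.
  rewrite /= in hk2; rewrite !mxE hf ?mul0r //=; apply/eqP; lia.
rewrite big1 // => k /neq_val hk1; have hkn := ltn_ord k; rewrite !mxE hf ?mul0r //; apply/eqP; lia.
Qed.

Lemma foldr_rcons (F : nat -> 'M[R]_n) s e :
  foldr (fun k A => F k *m A) 1%:M (rcons s e) = foldr (fun k A => F k *m A) 1%:M s *m F e.
Proof.
elim: s => [|a s IH] /=; first by rewrite mulmx1 mul1mx.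
by rewrite IH mulmxA.
Qed.

Lemma prod_down (F : nat -> R) z m : (m <= z)%N ->
  \prod_(0 <= t < m) F (z - 1 - t)%N = \prod_(z - m <= l < z) F l.
Proof.
elim: m => [|m IH] hm; first by rewrite !big_geq // subn0.
rewrite big_nat_recr //= IH; last by lia.
rewrite (@big_ltn _ _ _ (z - m.+1)); last by lia.
have -> : (z - m.+1).+1 = (z - m)%N by lia.
by rewrite mulrC; congr (F _ * _); lia.
Qed.


Variable x : nat -> R.
Hypothesis hx : distinct_on n x.

Definition rho a z j := \prod_(a <= l < j) (x z - x l).

Lemma rho_ge a z j : (j <= a)%N -> rho a z j = 1.
Proof. by move=> h; rewrite /rho big_geq. Qed.

Lemma rho_ltn a z j : (a < j)%N -> rho a z j = (x z - x a) * rho a.+1 z j.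
Proof. by move=> h; rewrite /rho big_ltn. Qed.

Lemma rho_recr a z j : (a <= j)%N -> rho a z j.+1 = rho a z j * (x z - x j).
Proof. by move=> h; rewrite /rho big_nat_recr. Qed.

Lemma rho_zero a i j : (a <= i < j)%N -> rho a i j = 0.
Proof.
move=> /andP[h1 h2]; rewrite /rho (big_cat_nat h1 (ltnW h2)) /= (@big_ltn _ _ _ i j) //.
by rewrite subrr mul0r mulr0.
Qed.

Lemma rho_neq0 a z j : (1 <= a)%N -> (z <= n)%N -> (j <= z)%N -> rho a z j != 0.
Proof.
move=> ha hz hj; rewrite /rho prodf_seq_neq0; apply/allP => l; rewrite mem_index_iota => hl.
apply/implyP => _; rewrite subr_eq0; apply/eqP; apply: hx; lia.
Qed.

Lemma x_neq a b : (1 <= a <= n)%N -> (1 <= b <= n)%N -> a <> b -> x a - x b != 0.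
Proof. by move=> ha hb hab; rewrite subr_eq0; apply/eqP; apply: hx. Qed.

Definition Gf a i j : R :=
  if (j < a)%N then (i == j)%:R else if (i < a)%N then 0 else rho a i j / rho a j j.

Definition Lf k (i j : nat) : R :=
    if i == j then 1
    else if i == j.+1 then
      (if i == (n - k).+1 then 1
       else if ((n - k).+1 < i)%N then
         \prod_(0 <= t < (k + i - n - 1)%N)
            ((x i - x (i - 1 - t)%N) / (x (i - 1)%N - x (i - 2 - t)%N))
       else 0)
    else 0.

Lemma Lmat_mkM k : Lmat n x k = mkM (Lf k).
Proof. by apply/matrixP => i j; rewrite !mxE. Qed.

Lemma Lsub b J : (b <= n)%N -> (J < n)%N ->
  Lf (n - b) J.+1 J = if (J < b)%N then 0 else rho b.+1 J.+1 J.+1 / rho b J J.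
Proof.
move=> hb hJ; rewrite /Lf (gtn_eqF (ltnSn J)) ?eqxx.
have -> : (n - (n - b))%N = b by lia.
rewrite eqSS; case: (ltngtP J b) => h.
- have -> : (b.+1 < J.+1)%N = false by lia.
  by [].
- rewrite ?ltnS ?h.
  have -> : (n - b + J.+1 - n - 1)%N = (J - b)%N by lia.
  rewrite prodf_div.
  rewrite (prod_down (fun l => x J.+1 - x l)); last by lia.
  rewrite [X in _ / X](eq_bigr (fun t => x J - x (J - 1 - t)%N)); last first.
    by move=> t _; congr (x _ - x _); lia.
  rewrite (prod_down (fun l => x J - x l)); last by lia.
  by rewrite /rho; congr (\prod_(_ <= _ < _) _ / \prod_(_ <= _ < _) _); lia.
- by subst J; rewrite !rho_ge // divr1.
Qed.


Lemma Lf_diag k i : Lf k i i = 1.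
Proof. by rewrite /Lf eqxx. Qed.

Lemma Gstep_nat b p q : (1 <= b)%N -> (b < n)%N -> (1 <= p <= n)%N -> (1 <= q)%N -> (q < n)%N ->
  Gf b.+1 p q + Gf b.+1 p q.+1 * (if (q < b)%N then 0 else rho b.+1 q.+1 q.+1 / rho b q q)
  = Gf b p q.
Proof.
move=> hb1 hbn hp hq1 hqn; rewrite /Gf.
case: (ltngtP q b) => hqb.
- have h1 : (q < b.+1)%N by lia.
  have h2 : (q.+1 < b.+1)%N by lia.
  by rewrite h1 h2 mulr0 addr0.
- have h1 : (q < b.+1)%N = false by lia.
  have h2 : (q.+1 < b.+1)%N = false by lia.
  rewrite h1 h2.
  case: (ltngtP p b) => hpb.
  + have h3 : (p < b.+1)%N by lia.
    by rewrite h3 mul0r addr0.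
  + have h3 : (p < b.+1)%N = false by lia.
    have e1 : (b.+1 <= q)%N by lia.
    rewrite h3 (rho_recr b.+1 p q e1) (rho_ltn b p q hqb) (rho_ltn b q q hqb).
    have n1 := @rho_neq0 b.+1 q q isT ltac:(lia) (leqnn q).
    have n2 := @rho_neq0 b.+1 q.+1 q.+1 isT ltac:(lia) (leqnn _).
    have n3 : x q - x b != 0 by apply: x_neq; lia.
    by field; rewrite n1 n2 n3.
  + subst p; rewrite ltnSn mul0r addr0 (@rho_zero b b q) ?mul0r //; lia.
- subst q; rewrite ltnSn ltnn.
  rewrite !(@rho_ge b.+1 _ b.+1) // (@rho_ge b b b) // divr1.
  case: (ltngtP p b) => hpb.
  + have h3 : (p < b.+1)%N by lia.
    by rewrite h3 mul0r addr0.
  + have h3 : (p < b.+1)%N = false by lia.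
    by rewrite h3 rho_ge // divr1 add0r mulr1.
  + by subst p; rewrite ltnSn rho_ge // mul0r addr0 divr1.
Qed.

Lemma Gstep_last b p : (1 <= b)%N -> (b < n)%N -> (1 <= p <= n)%N -> Gf b.+1 p n = Gf b p n.
Proof.
move=> hb1 hbn hp; rewrite /Gf.
have h1 : (n < b.+1)%N = false by lia.
have h2 : (n < b)%N = false by lia.
rewrite h1 h2.
case: (ltngtP p b) => hpb.
- have h3 : (p < b.+1)%N by lia.
  by rewrite h3.
- have h3 : (p < b.+1)%N = false by lia.
  rewrite h3.
  have [hpn|hpn] : (p < n)%N \/ p = n by lia.
    by rewrite (@rho_zero b.+1 p n) ?(@rho_zero b p n) ?mul0r //; lia.
  subst p; rewrite !divff //; apply: rho_neq0; lia.
- subst p; rewrite ltnSn rho_zero ?mul0r //; lia.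
Qed.

Lemma Gstep b : (1 <= b)%N -> (b < n)%N -> mkM (Gf b.+1) *m Lmat n x (n - b) = mkM (Gf b).
Proof.
move=> hb1 hbn; rewrite Lmat_mkM; apply/matrixP => i j.
rewrite mul_lowbi; last first.
  by move=> i' j' _ _ h1 h2; rewrite /Lf (negbTE h1) (negbTE h2).
rewrite mxE Lf_diag mulr1.
have hin := ltn_ord i; have hjn := ltn_ord j.
move: (i : nat) (j : nat) hin hjn => I J hI hJ.
case: ifP => hJ2.
  rewrite Lsub //; last by lia.
  apply: Gstep_nat => //; lia.
have -> : J.+1 = n by lia.
rewrite addr0; apply: Gstep_last => //; lia.
Qed.


Lemma LP_closed k : (k <= n.-1)%N ->
  foldr (fun k A => Lmat n x k *m A) 1%:M (iota 1 k) = mkM (Gf (n - k)).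
Proof.
elim: k => [|k IH] hk.
  apply/matrixP => i j; rewrite !mxE /Gf subn0.
  have hi := ltn_ord i; have hj := ltn_ord j.
  case: (ltnP j.+1 n) => hjn; first by rewrite eqSS.
  case: (ltnP i.+1 n) => hin.
    have -> : (i == j) = false by apply/eqP => /(congr1 val) /=; lia.
    by [].
  have -> : (i == j) = true by apply/eqP; apply: val_inj => /=; lia.
  by rewrite (@rho_ge n i.+1 j.+1) ?(@rho_ge n j.+1 j.+1) ?divr1.
rewrite -(addn1 k) iotaD cats1 foldr_rcons IH; last by lia.
have e1 : (n - k)%N = (n - (k + 1)).+1 by lia.
have e2 : (1 + k)%N = (n - (n - (k + 1)))%N by lia.
rewrite e1 e2; apply: Gstep; lia.
Qed.


Fixpoint hh (m d : nat) {struct m} : R :=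
  match m with
  | 0 => (d == 0)%:R
  | m'.+1 => (fix g (d : nat) : R :=
               match d with 0 => 1 | d'.+1 => hh m' d + x m'.+1 * g d' end) d
  end.

Lemma hhSS m d : hh m.+1 d.+1 = hh m d.+1 + x m.+1 * hh m.+1 d.
Proof. by []. Qed.

Lemma hh_0 m : hh m 0 = 1.
Proof. by case: m. Qed.

Lemma hh0S d : hh 0 d.+1 = 0.
Proof. by []. Qed.

Arguments hh : simpl never.

Definition Sf a i j : R :=
  if (i < a)%N then (i == j)%:R else if (j < i)%N then 0 else rho a i i * hh (i - a).+1 (j - i).

Definition Uf k (i j : nat) : R :=
    if i == j then (if (i <= n - k)%N then 1 else x i - x (n - k)%N)
    else if j == i.+1 then
      (if i == (n - k)%N then x 1%N
       else if ((n - k) < i)%N then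
         x (k + i + 1 - n)%N *
         \prod_(1 <= t < (k + i - n).+1)
            ((x i - x (i - t)%N) / (x i.+1 - x (i.+1 - t)%N))
       else 0)
    else 0.

Lemma Umat_mkM k : Umat n x k = mkM (Uf k).
Proof. by apply/matrixP => i j; rewrite !mxE. Qed.

Lemma Udiag b I : (b <= n)%N -> Uf (n - b) I I = if (I <= b)%N then 1 else x I - x b.
Proof. by move=> hb; rewrite /Uf eqxx; have -> : (n - (n - b))%N = b by lia. Qed.

Lemma Usup b I : (b <= n)%N -> (I < n)%N ->
  Uf (n - b) I I.+1 = if (I < b)%N then 0 else x (I - b).+1 * (rho b I I / rho b.+1 I.+1 I.+1).
Proof.
move=> hb hI; rewrite /Uf (ltn_eqF (ltnSn I)) eqxx.
have -> : (n - (n - b))%N = b by lia.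
case: (ltngtP I b) => h.
- by [].
- have -> : (n - b + I + 1 - n)%N = (I - b).+1 by lia.
  have -> : (n - b + I - n)%N = (I - b)%N by lia.
  congr (_ * _).
  rewrite big_add1 /= prodf_div.
  rewrite [X in X / _](eq_bigr (fun t => x I - x (I - 1 - t)%N)); last first.
    by move=> t _; congr (x _ - x _); lia.
  rewrite [X in _ / X](eq_bigr (fun t => x I.+1 - x (I.+1 - 1 - t)%N)); last first.
    by move=> t _; congr (x _ - x _); lia.
  rewrite (prod_down (fun l => x I - x l)); last by lia.
  rewrite (prod_down (fun l => x I.+1 - x l)); last by lia.
  by rewrite /rho; congr (\prod_(_ <= _ < _) _ / \prod_(_ <= _ < _) _); lia.
- by subst I; rewrite !rho_ge // divr1 subnn mulr1.
Qed.


Lemma Ustep_nat b p q : (1 <= b)%N -> (b < n)%N -> (1 <= p <= n)%N -> (1 <= q <= n)%N ->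
  (if (p <= b)%N then 1 else x p - x b) * Sf b.+1 p q +
  (if (p.+1 <= n)%N then
     (if (p < b)%N then 0 else x (p - b).+1 * (rho b p p / rho b.+1 p.+1 p.+1)) * Sf b.+1 p.+1 q
   else 0) = Sf b p q.
Proof.
move=> hb1 hbn hp hq; rewrite /Sf.
case: (ltngtP p b) => hpb.
- have h1 : (p <= b)%N by lia.
  have h2 : (p < b.+1)%N by lia.
  by rewrite ?h1 ?h2 mul1r; case: ifP => _; rewrite ?mul0r addr0.
- have h1 : (p <= b)%N = false by lia.
  have h2 : (p < b.+1)%N = false by lia.
  have h3 : (p.+1 < b.+1)%N = false by lia.
  rewrite ?h1 ?h2 ?h3.
  case: (ltngtP q p) => hqp.
  + have h4 : (q < p.+1)%N by lia.
    by rewrite ?h4 mulr0 mulr0 add0r; case: ifP.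
  + have h4 : (p.+1 <= n)%N by lia.
    have h5 : (q < p.+1)%N = false by lia.
    rewrite ?h4 ?h5.
    have -> : (p - b.+1).+1 = (p - b)%N by lia.
    have -> : (p.+1 - b.+1).+1 = (p - b).+1 by lia.
    have -> : (q - p)%N = (q - p.+1).+1 by lia.
    rewrite (hhSS (p - b) (q - p.+1)) (rho_ltn b p p hpb).
    have n1 := @rho_neq0 b.+1 p.+1 p.+1 isT h4 (leqnn _).
    by field; rewrite n1.
  + subst q; rewrite subnn !hh_0 (rho_ltn b p p hpb) ltnSn.
    by case: ifP => _; rewrite ?mulr0 ?mul0r ?addr0 !mulr1 ?mulrA.
- subst p.
  have h4 : (b.+1 <= n)%N by lia.
  rewrite ?leqnn ?ltnSn ?ltnn ?h4 mul1r subnn !rho_ge // divr1 mulr1 mul1r.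
  case: (ltngtP q b) => hqb.
  + have h5 : (q < b.+1)%N by lia.
    by rewrite h5 mulr0 addr0.
  + have h5 : (q < b.+1)%N = false by lia.
    rewrite h5 subnn add0r mul1r.
    have -> : (q - b)%N = (q - b.+1).+1 by lia.
    by rewrite hhSS hh0S add0r.
  + by subst q; rewrite ?ltnSn ?leqnn mulr0 addr0 subnn hh_0 mul1r.
Qed.

Lemma Ustep b : (1 <= b)%N -> (b < n)%N -> Umat n x (n - b) *m mkM (Sf b.+1) = mkM (Sf b).
Proof.
move=> hb1 hbn; rewrite Umat_mkM; apply/matrixP => i j.
rewrite mul_upbi; last first.
  by move=> i' j' _ _ h1 h2; rewrite /Uf eq_sym (negbTE h1) (negbTE h2).
rewrite mxE.
have hin := ltn_ord i; have hjn := ltn_ord j.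
move: (i : nat) (j : nat) hin hjn => I J hI hJ.
rewrite Udiag; last by lia.
rewrite -(@Ustep_nat b I.+1 J.+1 hb1 hbn ltac:(lia) ltac:(lia)).
congr (_ + _); case: ifP => hI2 //.
by rewrite Usup //; lia.
Qed.

Lemma US_closed k : (k <= n.-1)%N ->
  foldr (fun k A => Umat n x k *m A) 1%:M (rev (iota 1 k)) = mkM (Sf (n - k)).
Proof.
elim: k => [|k IH] hk.
  apply/matrixP => i j; rewrite !mxE /Sf subn0.
  have hi := ltn_ord i; have hj := ltn_ord j.
  case: (ltnP i.+1 n) => hin; first by rewrite eqSS.
  case: (ltnP j.+1 i.+1) => hji.
    have -> : (i == j) = false by apply/eqP => /(congr1 val) /=; lia.
    by [].
  have -> : (i == j) = true by apply/eqP; apply: val_inj => /=; lia.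
  have -> : (j.+1 - i.+1)%N = 0%N by lia.
  by rewrite hh_0 rho_ge // mulr1.
rewrite -(addn1 k) iotaD cats1 rev_rcons /= IH; last by lia.
have e1 : (n - k)%N = (n - (k + 1)).+1 by lia.
have e2 : (1 + k)%N = (n - (n - (k + 1)))%N by lia.
rewrite e1 e2; apply: Ustep; lia.
Qed.


Definition omega j z := \prod_(1 <= l < j.+1) (z - x l).

Lemma omS j z : omega j.+1 z = omega j z * (z - x j.+1).
Proof. by rewrite /omega big_nat_recr. Qed.

Lemma om0 z : omega 0 z = 1.
Proof. by rewrite /omega big_geq. Qed.

Lemma newton z d : \sum_(j < d.+1) omega j z * hh j.+1 (d - j) = z ^+ d.
Proof.
elim: d => [|d IH]; first by rewrite big_ord1 om0 hh_0 mulr1.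
rewrite exprS -IH mulr_sumr.
have L1 : \sum_(j < d.+2) omega j z * hh j.+1 (d.+1 - j) =
   \sum_(j < d.+1) omega j z * hh j (d.+1 - j)
   + \sum_(j < d.+1) x j.+1 * (omega j z * hh j.+1 (d - j)) + omega d.+1 z.
  rewrite big_ord_recr /= subnn hh_0 mulr1 -big_split /=; congr (_ + _).
  apply: eq_bigr => j _; have hj := ltn_ord j.
  have -> : (d.+1 - j)%N = (d - j).+1 by lia.
  by rewrite hhSS; ring.
have L2 : \sum_(j < d.+1) z * (omega j z * hh j.+1 (d - j)) =
   \sum_(j < d.+1) omega j.+1 z * hh j.+1 (d - j)
   + \sum_(j < d.+1) x j.+1 * (omega j z * hh j.+1 (d - j)).
  rewrite -big_split /=; apply: eq_bigr => j _; rewrite omS; ring.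
have L3 : \sum_(j < d.+1) omega j z * hh j (d.+1 - j) + omega d.+1 z =
   \sum_(j < d.+1) omega j.+1 z * hh j.+1 (d - j).
  rewrite big_ord_recl /= hh0S mulr0 add0r [RHS]big_ord_recr /= subnn hh_0 mulr1.
  by congr (_ + _); apply: eq_bigr => j _.
rewrite L1 L2 -L3; ring.
Qed.


Lemma vander : mkM (Gf 1) *m mkM (Sf 1) = \matrix_(i < n, j < n) x i.+1 ^+ j.
Proof.
apply/matrixP => i k; rewrite !mxE.
have hi := ltn_ord i; have hk := ltn_ord k.
rewrite -(newton (x i.+1) k).
have -> : \sum_(j < k.+1) omega j (x i.+1) * hh j.+1 (k - j) =
   \sum_(j < n) (if (j < k.+1)%N then omega j (x i.+1) * hh j.+1 (k - j) else 0).
  by rewrite (big_ord_widen n (fun j => omega j (x i.+1) * hh j.+1 (k - j)) hk) big_mkcond.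
apply: eq_bigr => j _; rewrite !mxE /Gf /Sf /=.
have hj := ltn_ord j.
rewrite !subSS subn0 ltnS.
case: (leqP j k) => hjk.
  have -> : (j < k.+1)%N by lia.
  rewrite mulrA divfK; first by [].
  apply: rho_neq0; lia.
have -> : (j < k.+1)%N = false by lia.
by rewrite mulr0.
Qed.

End Aux.

Lemma mulmx_D (R : realFieldType) n m (A : 'M[R]_n) :
  A *m Dmat n m = \matrix_(i < n, l < n) (A i l * (if (l <= m)%N then ('C(m, l))%:R else 0)).
Proof.
apply/matrixP => i l; rewrite !mxE (bigD1 l) //= big1 ?addr0; first by rewrite mxE eqxx.
by move=> k hk; rewrite mxE (negbTE hk) mulr0.
Qed.

Theorem theorem2p4 (R : realFieldType) (n m : nat) (x y : nat -> R) :
  (2 <= n)%N -> (1 <= m <= n - 1)%N ->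
  distinct_on n x -> distinct_on n y ->
  Spow n m x y =
  ((Lprod n x *m Uprod n x) *m Dmat n m) *m (Lprod n y *m Uprod n y)^T.
Proof.
move=> hn hm hx hy.
have V : forall z : nat -> R, distinct_on n z ->
    Lprod n z *m Uprod n z = \matrix_(i < n, j < n) z i.+1 ^+ j.
  move=> z hz; rewrite /Lprod /Uprod (@LP_closed R n z hz n.-1 (leqnn _)) (@US_closed R n z hz n.-1 (leqnn _)).
  have -> : (n - n.-1)%N = 1%N by lia.
  exact: (@vander R n z hz).
rewrite (V x hx) (V y hy) mulmx_D.
apply/matrixP => i j; rewrite !mxE addrC exprD1n.
have hmn : (m.+1 <= n)%N by lia.
have -> : \sum_(l < m.+1) (x i.+1 * y j.+1) ^+ l *+ 'C(m, l) =
  \sum_(l < n) (if (l < m.+1)%N then (x i.+1 * y j.+1) ^+ l *+ 'C(m, l) else 0).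
  by rewrite (big_ord_widen n (fun l => (x i.+1 * y j.+1) ^+ l *+ 'C(m, l)) hmn) big_mkcond.
apply: eq_bigr => l _; rewrite !mxE ltnS.
case: ifP => _; last by rewrite mulr0 mul0r.
by rewrite -mulr_natr exprMn; ring.
Qed.
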